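(* Let $F$ be an infinite field of characteristic different from $2$, and let $\mathbb{O}=(((F,\alpha),\beta),\gamma)$ be the octonion (Cayley–Dickson) algebra, with its $\mathbb{Z}_2^3$-grading coming from the Cayley–Dickson process. Then the $T_{\mathbb{Z}_2^3}$-ideal $T_{\mathbb{Z}_2^3}(\mathbb{O})$ of $\mathbb{Z}_2^3$-graded polynomial identities of $\mathbb{O}$ is generated, as a graded $T$-ideal, by the following identities (for distinct variables $x_1,x_2,x_3$ whose degrees satisfy the stated conditions): \begin{align*} [x_1,x_2]=0, &\quad |\langle g(x_1),g(x_2)\rangle|\le 2;\\ x_1\circ x_2=0, &\quad |\langle g(x_1),g(x_2)\rangle|\ge 4;\\ (x_1,x_2,x_3)=0, &\quad |\langle g(x_1),g(x_2),g(x_3)\rangle|\le 4;\\ (x_1x_2)x_3+x_1(x_2x_3)=0, &\quad \langle g(x_1),g(x_2),g(x_3)\rangle=\mathbb{Z}_2^3. \end{align*}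
   Context: Cayley–Dickson process: if $A$ is a unital algebra over a commutative ring with an involution $a\mapsto\bar a$ and $\alpha\neq 0$ a scalar, $(A,\alpha)=A\oplus A$ with product $(a_1,a_2)(a_3,a_4)=(a_1a_3+\alpha a_4\bar a_2,\ \bar a_1a_4+a_3a_2)$ and involution $\overline{(a_1,a_2)}=(\bar a_1,-a_2)$. If $A$ is $G$-graded, $(A,\alpha)$ is $G\times\mathbb{Z}_2$-graded by $(A,\alpha)_{(h,0)}=A_h\oplus 0$, $(A,\alpha)_{(h,1)}=0\oplus A_h$. Here $F$ is given the trivial involution and trivial grading, and $\alpha,\beta,\gamma\in F$ are nonzero, so $\mathbb{O}$ is $\mathbb{Z}_2^3$-graded; groups $\mathbb{Z}_2^k$ are written additively. Graded identities: $F_G\{X\}$ is the free nonassociative algebra on variables $x_i^a$ ($i\in\mathbb{N}$, $a\in G$), graded by declaring $g(x_i^a)=a$ and $g(uv)=g(u)g(v)$ for monomials. A polynomial $f(x_1,\dots,x_n)$ is a graded identity of a $G$-graded algebra $A$ if $f(a_1,\dots,a_n)=0$ for all $a_i\in A_{g(x_i)}$; $T_G(A)$ is the set of all of them. A graded $T$-ideal is an ideal of $F_G\{X\}$ invariant under all graded endomorphisms (those sending each variable to an element of the same degree); ''generated'' means the smallest such ideal containing the given polynomials. $[x,y]=xy-yx$, $x\circ y=xy+yx$, $(x,y,z)=(xy)z-x(yz)$; $\langle\cdot\rangle$ is the subgroup generated. *)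

(* Defs.v *)
From HB Require Import structures.
From mathcomp Require Import all_boot all_algebra.
Set Implicit Arguments. Unset Strict Implicit. Unset Printing Implicit Defensive.
Import GRing.Theory.
Local Open Scope ring_scope.

Definition G := (bool * bool * bool)%type.

Definition subgroup_closed (H : {set G}) : bool :=
  (0 \in H) && [forall x in H, forall y in H, (x - y) \in H].
Definition gen (A : {set G}) : {set G} :=
  \bigcap_(H : {set G} | subgroup_closed H && (A \subset H)) H.

Section CD.
Variables (F : fieldType) (A : zmodType).
Variables (sc : F -> A -> A) (mul : A -> A -> A) (cj : A -> A) (al : F).
Definition cd_mul (x y : A * A) : A * A :=
  (mul x.1 y.1 + sc al (mul y.2 (cj x.2)), mul (cj x.1) y.2 + mul y.1 x.2).
Definition cd_cj (x : A * A) : A * A := (cj x.1, - x.2).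
Definition cd_sc (c : F) (x : A * A) : A * A := (sc c x.1, sc c x.2).
Definition cd_hom (H : Type) (hom : H -> A -> bool) (g : H * bool) (x : A * A) : bool :=
  if g.2 then (x.1 == 0) && hom g.1 x.2 else hom g.1 x.1 && (x.2 == 0).
End CD.

Section Octonions.
Variables (F : fieldType) (al be ga : F).
Definition sc0 (c : F) (x : F) : F := c * x.
Definition mul0 (x y : F) : F := x * y.
Definition cj0 (x : F) : F := x.
Definition hom0 (_ : unit) (_ : F) : bool := true.

Definition A1 := (F * F)%type.
Definition sc1 := cd_sc sc0.
Definition mul1 : A1 -> A1 -> A1 := cd_mul sc0 mul0 cj0 al.
Definition cj1 : A1 -> A1 := cd_cj cj0.
Definition hom1 := cd_hom hom0.

Definition A2 := (A1 * A1)%type.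
Definition sc2 := cd_sc sc1.
Definition mul2 : A2 -> A2 -> A2 := cd_mul sc1 mul1 cj1 be.
Definition cj2 : A2 -> A2 := cd_cj cj1.
Definition hom2 := cd_hom hom1.

Definition Oct := (A2 * A2)%type.
Definition scO := cd_sc sc2.
Definition mulO : Oct -> Oct -> Oct := cd_mul sc2 mul2 cj2 ga.
Definition homO' := cd_hom hom2.
(* grading group ((1 x Z2) x Z2) x Z2 identified with G = Z2^3 *)
Definition homO (g : G) (x : Oct) : bool :=
  homO' (((tt, g.1.1), g.1.2), g.2) x.
End Octonions.

(* variables x_i^a, i : nat, a : G.  Polynomials are represented by terms;
   two terms denote the same element of F_G{X} iff they have the same
   coefficient on every nonassociative monomial. *)
Inductive term (F : Type) : Type :=
| TVar of nat & G
| TZero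
| TAdd of term F & term F
| TScale of F & term F
| TMul of term F & term F.
Arguments TVar {F}. Arguments TZero {F}.

Inductive mono : Type :=
| MVar of nat & G
| MMul of mono & mono.

Fixpoint mdeg (m : mono) : G :=
  match m with MVar _ a => a | MMul m1 m2 => mdeg m1 + mdeg m2 end.

Section Free.
Variable F : fieldType.

Fixpoint coef (p : term F) (m : mono) : F :=
  match p with
  | TVar i a => if m is MVar j b then ((i == j) && (a == b))%:R else 0
  | TZero => 0
  | TAdd p q => coef p m + coef q m
  | TScale c p => c * coef p m
  | TMul p q => if m is MMul m1 m2 then coef p m1 * coef q m2 else 0
  end.

Definition peq (p q : term F) : Prop := forall m, coef p m = coef q m.

Definition homog (a : G) (p : term F) : Prop := forall m, coef p m != 0 -> mdeg m = a.

Fixpoint subst (s : nat -> G -> term F) (p : term F) : term F :=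
  match p with
  | TVar i a => s i a
  | TZero => TZero
  | TAdd p q => TAdd (subst s p) (subst s q)
  | TScale c p => TScale c (subst s p)
  | TMul p q => TMul (subst s p) (subst s q)
  end.

Definition graded_endo (s : nat -> G -> term F) : Prop := forall i a, homog a (s i a).

Definition TClosed (I : term F -> Prop) : Prop :=
  [/\ (forall p q, peq p q -> I p -> I q) /\ I TZero,
      (forall p q, I p -> I q -> I (TAdd p q)),
      (forall c p, I p -> I (TScale c p)),
      (forall p q, I p -> I (TMul p q)) /\ (forall p q, I q -> I (TMul p q))
    & (forall s, graded_endo s -> forall p, I p -> I (subst s p))].

Definition TGen (S : term F -> Prop) (f : term F) : Prop :=
  forall I, TClosed I -> (forall p, S p -> I p) -> I f.

Definition tcomm (p q : term F) := TAdd (TMul p q) (TScale (-1) (TMul q p)).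
Definition tjord (p q : term F) := TAdd (TMul p q) (TMul q p).
Definition tassoc (p q r : term F) :=
  TAdd (TMul (TMul p q) r) (TScale (-1) (TMul p (TMul q r))).
Definition tantiassoc (p q r : term F) := TAdd (TMul (TMul p q) r) (TMul p (TMul q r)).

Definition oct_gens (f : term F) : Prop :=
  (exists i j a b, (i, a) <> (j, b) /\ #|gen [set a; b]| <= 2 /\
     f = tcomm (TVar i a) (TVar j b))%N
  \/ (exists i j a b, (i, a) <> (j, b) /\ 4 <= #|gen [set a; b]| /\
     f = tjord (TVar i a) (TVar j b))%N
  \/ (exists i j k a b c, [/\ (i, a) <> (j, b), (i, a) <> (k, c), (j, b) <> (k, c),
       #|gen [set a; b; c]| <= 4 & f = tassoc (TVar i a) (TVar j b) (TVar k c)])%N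
  \/ (exists i j k a b c, [/\ (i, a) <> (j, b), (i, a) <> (k, c), (j, b) <> (k, c),
       gen [set a; b; c] = [set: G] & f = tantiassoc (TVar i a) (TVar j b) (TVar k c)]).

Variables (al be ga : F).
Fixpoint evalO (v : nat -> G -> Oct F) (p : term F) : Oct F :=
  match p with
  | TVar i a => v i a
  | TZero => 0
  | TAdd p q => evalO v p + evalO v q
  | TScale c p => scO c (evalO v p)
  | TMul p q => mulO al be ga (evalO v p) (evalO v q)
  end.

Definition graded_identity_O (f : term F) : Prop :=
  forall v : nat -> G -> Oct F, (forall i a, homO a (v i a)) -> evalO v f = 0.
End Free.

(* Main.v *)
From HB Require Import structures.
Require Import Defs.
From mathcomp Require Import all_boot all_algebra ring zify.

Set Implicit Arguments. Unset Strict Implicit. Unset Printing Implicit Defensive.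
Import GRing.Theory.
Local Open Scope ring_scope.

Record level (F : fieldType) := Level {
  lA : zmodType; lsc : F -> lA -> lA; lmul : lA -> lA -> lA; lcj : lA -> lA;
  lH : eqType; lhom : lH -> lA -> bool; lhadd : lH -> lH -> lH;
  lemb : lH -> F -> lA; lproj : lH -> lA -> F; lsg : lH -> lH -> F; leps : lH -> F;
  scDr : forall c x y, lsc c (x + y) = lsc c x + lsc c y;
  scDl : forall c d x, lsc (c + d) x = lsc c x + lsc d x;
  scA : forall c d x, lsc c (lsc d x) = lsc (c * d) x;
  sc1 : forall x, lsc 1 x = x;
  mulDl : forall x y z, lmul (x + y) z = lmul x z + lmul y z;
  mulDr : forall x y z, lmul x (y + z) = lmul x y + lmul x z;
  mulZl : forall c x y, lmul (lsc c x) y = lsc c (lmul x y);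
  mulZr : forall c x y, lmul x (lsc c y) = lsc c (lmul x y);
  cjD : forall x y, lcj (x + y) = lcj x + lcj y;
  cjZ : forall c x, lcj (lsc c x) = lsc c (lcj x);
  haddC : forall h k, lhadd h k = lhadd k h;
  embD : forall h s u, lemb h s + lemb h u = lemb h (s + u);
  scE : forall c h s, lsc c (lemb h s) = lemb h (c * s);
  cjE : forall h s, lcj (lemb h s) = lemb h (leps h * s);
  mulE : forall h k s u, lmul (lemb h s) (lemb k u) = lemb (lhadd h k) (lsg h k * (s * u));
  projE : forall h k s, lproj h (lemb k s) = if h == k then s else 0;
  projD : forall h x y, lproj h (x + y) = lproj h x + lproj h y;
  projZ : forall h c x, lproj h (lsc c x) = c * lproj h x;
  homP : forall h x, lhom h x = (x == lemb h (lproj h x));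
  sgnz : forall h k, lsg h k != 0;
  epsnz : forall h, leps h != 0 }.

Arguments lA {F} l. Arguments lsc {F} l. Arguments lmul {F} l. Arguments lcj {F} l.
Arguments lH {F} l. Arguments lhom {F} l. Arguments lhadd {F} l. Arguments lemb {F} l.
Arguments lproj {F} l. Arguments lsg {F} l. Arguments leps {F} l.
Arguments scDr {F} l. Arguments scDl {F} l. Arguments scA {F} l. Arguments sc1 {F} l.
Arguments mulDl {F} l. Arguments mulDr {F} l. Arguments mulZl {F} l. Arguments mulZr {F} l.
Arguments cjD {F} l. Arguments cjZ {F} l. Arguments haddC {F} l. Arguments embD {F} l.
Arguments scE {F} l. Arguments cjE {F} l. Arguments mulE {F} l. Arguments projE {F} l.
Arguments projD {F} l. Arguments projZ {F} l. Arguments homP {F} l. Arguments sgnz {F} l. Arguments epsnz {F} l.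

Section LevelTheory.
Variables (F : fieldType) (L : level F).
Lemma addKid (A : zmodType) (x : A) : x = x + x -> x = 0.
Proof. by move=> h; apply/eqP; rewrite -(subrr x) {2}h addrK. Qed.
Lemma lmul0 x : lmul L 0 x = 0.
Proof. by apply: addKid; rewrite -mulDl addr0. Qed.
Lemma lmulr0 x : lmul L x 0 = 0.
Proof. by apply: addKid; rewrite -mulDr addr0. Qed.
Lemma lcj0 : lcj L 0 = 0.
Proof. by apply: addKid; rewrite -cjD addr0. Qed.
Lemma lsc0 c : lsc L c 0 = 0.
Proof. by apply: addKid; rewrite -scDr addr0. Qed.
Lemma lsc0l x : lsc L 0 x = 0.
Proof. by apply: addKid; rewrite -scDl addr0. Qed.
Lemma lemb0 h : lemb L h 0 = 0.
Proof. by apply: addKid; rewrite embD addr0. Qed.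
Lemma lproj0 h : lproj L h 0 = 0.
Proof. by apply: addKid; rewrite -projD addr0. Qed.
Lemma lembN h s : lemb L h (- s) = - lemb L h s.
Proof. by apply/eqP; rewrite -addr_eq0 embD addNr lemb0. Qed.
Lemma lscN c x : lsc L c (- x) = - lsc L c x.
Proof. by apply/eqP; rewrite -addr_eq0 -scDr addNr lsc0. Qed.
End LevelTheory.

Section Lift.
Variables (F : fieldType) (L : level F) (al : F) (hal : al != 0).
Let A := lA L.
Definition Hl := (lH L * bool)%type.
Definition homl := cd_hom (lhom L).
Definition haddl (x y : Hl) : Hl := (lhadd L x.1 y.1, x.2 (+) y.2).
Definition embl (g : Hl) (s : F) : A * A :=
  if g.2 then (0, lemb L g.1 s) else (lemb L g.1 s, 0).
Definition projl (g : Hl) (x : A * A) : F := lproj L g.1 (if g.2 then x.2 else x.1).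
Definition sgl (x y : Hl) : F :=
  if x.2 then (if y.2 then al * (leps L x.1 * lsg L y.1 x.1) else lsg L y.1 x.1)
  else (if y.2 then leps L x.1 * lsg L x.1 y.1 else lsg L x.1 y.1).
Definition epsl (x : Hl) : F := if x.2 then -1 else leps L x.1.
Definition scl := cd_sc (lsc L).
Definition mull := cd_mul (lsc L) (lmul L) (lcj L) al.
Definition cjl := cd_cj (lcj L).

Lemma pairD (B C : zmodType) (a c : B) (b d : C) : (a,b) + (c,d) = (a+c, b+d). Proof. by []. Qed.
Lemma pairN (B C : zmodType) (a : B) (b : C) : - (a,b) = (-a, -b). Proof. by []. Qed.
Lemma pair0 (B C : zmodType) : (0 : B * C) = (0, 0). Proof. by []. Qed.

Definition lift : level F.
refine (@Level F [the zmodType of (A * A)%type] scl mull cjl [the eqType of Hl] homl haddl embl projl sgl epsl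
  _ _ _ _ _ _ _ _ _ _ _ _ _ _ _ _ _ _ _ _ _).
- move=> c [x1 x2] [y1 y2]; by rewrite /scl /cd_sc /= pairD !scDr.
- by move=> c d [x1 x2]; rewrite /scl /cd_sc /= pairD !scDl.
- by move=> c d [x1 x2]; rewrite /scl /cd_sc /= !scA.
- by move=> [x1 x2]; rewrite /scl /cd_sc /= !sc1.
- move=> [x1 x2] [y1 y2] [z1 z2]; rewrite /mull /cd_mul /= !pairD.
  by rewrite !cjD !mulDl !mulDr scDr; congr pair; rewrite addrACA.
- move=> [x1 x2] [y1 y2] [z1 z2]; rewrite /mull /cd_mul /= !pairD.
  by rewrite !mulDl !mulDr scDr; congr pair; rewrite addrACA.
- move=> c [x1 x2] [y1 y2]; rewrite /mull /scl /cd_mul /cd_sc /=.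
  by rewrite !cjZ !mulZl !mulZr !scA !scDr scA [al * c]mulrC.
- move=> c [x1 x2] [y1 y2]; rewrite /mull /scl /cd_mul /cd_sc /=.
  by rewrite !mulZl !mulZr !scA !scDr scA [al * c]mulrC.
- by move=> [x1 x2] [y1 y2]; rewrite /cjl /cd_cj /= cjD opprD.
- by move=> c [x1 x2]; rewrite /cjl /scl /cd_cj /cd_sc /= cjZ lscN.
- by move=> [h b] [k c]; rewrite /haddl /= haddC addbC.
- by move=> [h []] s u; rewrite /embl /= pairD embD addr0.
- by move=> c [h []] s; rewrite /scl /cd_sc /embl /= scE lsc0.
- move=> [h []] s; rewrite /cjl /cd_cj /embl /epsl /=.
  + by rewrite lcj0 mulN1r lembN.
  + by rewrite cjE oppr0.
- move=> [h b] [k c] s u; rewrite /mull /cd_mul /embl /haddl /sgl /=.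
  case: b; case: c => /=; rewrite ?lcj0 ?lmul0 ?lmulr0 ?lsc0 ?add0r ?addr0 ?cjE ?mulE ?scE //.
  + by rewrite haddC; congr (lemb _ _ _, _); ring.
  + by rewrite haddC; congr (_, lemb _ _ _); ring.
  + by congr (_, lemb _ _ _); ring.
- move=> [h b] [k c] s; rewrite /projl /embl /=.
  case: b; case: c => /=; rewrite ?projE ?lproj0 ?xpair_eqE ?andbT ?andbF //; by case: (h == k).
- by move=> [h b] [x1 x2] [y1 y2]; rewrite /projl /=; case: b; rewrite projD.
- by move=> [h b] c [x1 x2]; rewrite /projl /=; case: b; rewrite projZ.
- move=> [h b] [x1 x2]; rewrite /homl /cd_hom /projl /embl /=.
  by case: b; rewrite xpair_eqE homP // andbC.
- move=> [h b] [k c]; rewrite /sgl /=; case: b; case: c => /=;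
  by rewrite ?mulf_neq0 ?sgnz ?epsnz.
- by move=> [h b]; rewrite /epsl /=; case: b; rewrite ?oppr_eq0 ?oner_neq0 ?epsnz.
Defined.
End Lift.

Section Base.
Variable F : fieldType.
Definition base : level F.
refine (@Level F F (@sc0 F) (@mul0 F) (@cj0 F) (unit : eqType) (@hom0 F) (fun _ _ => tt)
  (fun _ s => s) (fun _ x => x) (fun _ _ => 1) (fun _ => 1) _ _ _ _ _ _ _ _ _ _ _ _ _ _ _ _ _ _ _ _ _);
  rewrite /sc0 /mul0 /cj0 /hom0 //=;
  move=> *; rewrite ?mulrDr ?mulrDl ?mulrA ?mul1r ?eqxx ?oner_neq0 //; congr (_ * _); exact: mulrC.
Defined.
End Base.

Section Tower.
Variables (F : fieldType) (al be ga : F) (hal : al != 0) (hbe : be != 0) (hga : ga != 0).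
Definition L3 := lift (lift (lift (base F) hal) hbe) hga.
Lemma L3mul : lmul L3 = mulO al be ga. Proof. by []. Qed.
Lemma L3sc : lsc L3 = @scO F. Proof. by []. Qed.
Lemma L3A : lA L3 = Oct F :> Type. Proof. by []. Qed.
Definition toH (g : G) : lH L3 := (((tt, g.1.1), g.1.2), g.2).
Lemma L3hom g x : homO g x = lhom L3 (toH g) x. Proof. by []. Qed.
Lemma L3zero : (0 : lA L3) = (0 : Oct F). Proof. by []. Qed.
Lemma L3add (x y : Oct F) : (x + y : lA L3) = x + y. Proof. by []. Qed.
Lemma toH_add a b : lhadd L3 (toH a) (toH b) = toH (a + b).
Proof. by case: a => [[? ?] ?]; case: b => [[? ?] ?]. Qed.
End Tower.

Set Implicit Arguments. Unset Strict Implicit. Unset Printing Implicit Defensive.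
Import GRing.Theory.
Local Open Scope ring_scope.

Section Ind.
Variables (F : fieldType) (Finf : forall s : seq F, exists x : F, x \notin s).

Lemma exists_uniq n : exists s : seq F, uniq s /\ size s = n.
Proof.
elim: n => [|n [s [us ss]]]; first by exists [::].
have [x hx] := Finf s; exists (x :: s); by rewrite /= hx us ss.
Qed.

Lemma poly_inf (p : {poly F}) : (forall z, p.[z] = 0) -> p = 0.
Proof.
move=> hz; apply/eqP; apply/negPn/negP => hp.
have [s [us ss]] := exists_uniq (size p).
have ha : all (root p) s by apply/allP => z _; rewrite /root hz.
by have := max_poly_roots hp ha us; rewrite ss ltnn.
Qed.

Variable K : eqType.

Lemma perm_memP (s t : seq K) : (forall y, count_mem y s = count_mem y t) -> perm_eq s t.
Proof. by move=> h; apply/allP => y _; rewrite /= h. Qed.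

Lemma cnt_filt (x y : K) s : y != x -> count_mem y [seq z <- s | z != x] = count_mem y s.
Proof.
move=> hyx; elim: s => //= z s IH; case: (eqVneq z x) => [->|hzx] /=.
  by rewrite IH eq_sym (negbTE hyx).
by rewrite IH.
Qed.

Lemma perm_split (x : K) s t :
  perm_eq s t = (count_mem x s == count_mem x t) && perm_eq [seq z <- s | z != x] [seq z <- t | z != x].
Proof.
apply/idP/idP.
  by move=> hp; rewrite (permP hp) eqxx perm_filter.
case/andP => /eqP hc hf; apply: perm_memP => y.
case: (eqVneq y x) => [->//|hyx].
by rewrite -(@cnt_filt x y s hyx) -(@cnt_filt x y t hyx) (permP hf).
Qed.

Lemma prod_split (x : K) (z : F) (t : K -> F) l :
  \prod_(y <- l) (if y == x then z else t y) = z ^+ count_mem x l * \prod_(y <- [seq y <- l | y != x]) t y.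
Proof.
elim: l => [|y l IH]; first by rewrite !big_nil mulr1.
rewrite big_cons IH /=; case: eqP => [->|hyx] /=.
  by rewrite add1n exprS mulrA.
by rewrite big_cons add0n mulrCA.
Qed.

Lemma leq_term (T : eqType) (f : T -> nat) (w0 : T) I : w0 \in I -> (f w0 <= \sum_(w <- I) f w)%N.
Proof.
elim: I => // w I IH; rewrite inE big_cons; case/orP => [/eqP->|/IH h]; first exact: leq_addr.
exact: leq_trans h (leq_addl _ _).
Qed.

Lemma ind_empty (I : seq (F * seq K)) : (forall w, w \in I -> w.2 = [::]) ->
  (forall t : K -> F, \sum_(w <- I) w.1 * \prod_(x <- w.2) t x = 0) ->
  forall l0, \sum_(w <- I | perm_eq w.2 l0) w.1 = 0.
Proof.
move=> he H l0.
have -> : \sum_(w <- I | perm_eq w.2 l0) w.1 = (perm_eq [::] l0)%:R * \sum_(w <- I) w.1.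
  elim: I he {H} => [|w I IH] he; first by rewrite !big_nil mulr0.
  rewrite !big_cons IH; last by move=> w' hw; apply: he; rewrite inE hw orbT.
  rewrite he ?inE ?eqxx //; case: (perm_eq [::] l0); rewrite ?mul1r ?mul0r ?add0r //.
have := H (fun _ => 0); rewrite big_seq_cond (eq_bigr (fun w => w.1)).
  by rewrite -big_seq_cond => ->; rewrite mulr0.
by move=> w /andP [hw _]; rewrite he // big_nil mulr1.
Qed.

Lemma ind (I : seq (F * seq K)) :
  (forall t : K -> F, \sum_(w <- I) w.1 * \prod_(x <- w.2) t x = 0) ->
  forall l0, \sum_(w <- I | perm_eq w.2 l0) w.1 = 0.
Proof.
move: {2}(\sum_(w <- I) size w.2)%N (leqnn (\sum_(w <- I) size w.2)) => N.
elim: N I => [|N IH] I hN H l0.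
  apply: ind_empty H l0 => w hw; apply/eqP; rewrite -size_eq0 -leqn0.
  exact: leq_trans (leq_term (fun w => size w.2) hw) hN.
case: (boolP (has (fun w => w.2 != [::]) I)) => [/hasP [w0 hw0 hne]|/hasPn hall]; last first.
  by apply: ind_empty H l0 => w /hall /negPn /eqP.
case hw0e: w0.2 hne => [//|x l'] _.
set filt := fun l : seq K => [seq y <- l | y != x].
set cnt := fun l : seq K => count_mem x l.
pose Ie e := [seq (w.1, filt w.2) | w <- [seq w <- I | cnt w.2 == e]].
have He : forall e (t : K -> F), \sum_(w <- Ie e) w.1 * \prod_(y <- w.2) t y = 0.
  move=> e t.
  pose P := \sum_(w <- I) (w.1 * \prod_(y <- filt w.2) t y) *: 'X^(cnt w.2).
  have P0 : P = 0.
    apply: poly_inf => z; rewrite horner_sum; apply: (etrans _ (H (fun y => if y == x then z else t y))).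
    apply: eq_bigr => w _; rewrite hornerZ hornerXn prod_split; by rewrite -mulrA [_ * (_ ^+ _)]mulrC.
  have := congr1 (fun p : {poly F} => p`_e) P0; rewrite coef_sum coef0 => hc; apply: (etrans _ hc).
  rewrite big_map big_filter big_mkcond /=; apply: eq_bigr => w _.
  by rewrite coefZ coefXn [e == _]eq_sym; case: (cnt w.2 == e); rewrite ?mulr1 ?mulr0.
have hsz : forall e, (\sum_(w <- Ie e) size w.2 <= N)%N.
  move=> e.
  have h1 : (\sum_(w <- Ie e) size w.2 <= \sum_(w <- I) size (filt w.2))%N.
    rewrite big_map big_filter big_mkcond /=; apply: leq_sum => w _; by case: ifP.
  have h2 : (\sum_(w <- I) size w.2 = \sum_(w <- I) size (filt w.2) + \sum_(w <- I) cnt w.2)%N.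
    rewrite -big_split /=; apply: eq_bigr => w _.
    by rewrite -(count_predC (pred1 x) w.2) /filt /cnt size_filter addnC.
  have h3 : (0 < \sum_(w <- I) cnt w.2)%N.
    apply: leq_trans (leq_term (fun w => cnt w.2) hw0); by rewrite /cnt hw0e /= eqxx.
  lia.
apply: (etrans _ (IH (Ie (cnt l0)) (hsz _) (He _) (filt l0))).
rewrite big_map big_filter_cond; apply: eq_bigl => w /=.
exact: perm_split.
Qed.
End Ind.

Set Implicit Arguments. Unset Strict Implicit. Unset Printing Implicit Defensive.
Import GRing.Theory.
Local Open Scope ring_scope.

Definition bsc (e : bool) (a : G) : G := if e then a else 0.
Definition lin (a b c u : G) : G := bsc u.1.1 a + bsc u.1.2 b + bsc u.2 c.
Definition codes : seq G := [:: (false,false,false); (true,false,false); (false,true,false); (true,true,false);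
  (false,false,true); (true,false,true); (false,true,true); (true,true,true)].
Definition span a b c : seq G := map (lin a b c) codes.
Definition dep2 (a b : G) := [|| a == 0, b == 0 | a == b].
Definition dep3 (a b c : G) := [|| a == 0, b == 0, c == 0, a == b, a == c, b == c | a + b == c].

Lemma oppG (x : G) : - x = x. Proof. by case: x => [[[] []] []]. Qed.
Lemma addGG (x : G) : x + x = 0. Proof. by case: x => [[[] []] []]. Qed.
Lemma codes_all (x : G) : x \in codes. Proof. by case: x => [[[] []] []]. Qed.
Lemma bsc_add e e' a : bsc e a + bsc e' a = bsc (e (+) e') a.
Proof. by case: e; case: e'; rewrite /= ?addr0 ?add0r ?addGG. Qed.
Lemma lin_add a b c u w : lin a b c u + lin a b c w = lin a b c (u + w).
Proof.
case: u => [[u1 u2] u3]; case: w => [[w1 w2] w3].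
by rewrite /lin /= addrACA -(addrACA (bsc u1 a)) !bsc_add.
Qed.

Lemma span_closed a b c : subgroup_closed [set x | x \in span a b c].
Proof.
apply/andP; split.
  by rewrite inE; apply/mapP; exists (false,false,false) => //; rewrite /lin /= ?addr0.
apply/forallP => x; apply/implyP; rewrite inE => /mapP [u _ ->].
apply/forallP => y; apply/implyP; rewrite inE => /mapP [w _ ->].
by rewrite inE oppG lin_add; apply: map_f; apply: codes_all.
Qed.

Lemma gen_sub (H A : {set G}) : subgroup_closed H -> A \subset H -> gen A \subset H.
Proof. by move=> h1 h2; apply: (bigcap_inf H); rewrite h1 h2. Qed.

Lemma gen_add (A : {set G}) x y : x \in gen A -> y \in gen A -> x + y \in gen A.
Proof.
move=> /bigcapP hx /bigcapP hy; apply/bigcapP => H hH.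
have /andP [/andP [_ /forallP hc] _] := hH.
have := hc x; move/implyP/(_ (hx H hH))/forallP/(_ y)/implyP/(_ (hy H hH)).
by rewrite oppG.
Qed.

Lemma gen0 (A : {set G}) : 0 \in gen A.
Proof. by apply/bigcapP => H /andP [/andP [h _] _]. Qed.

Lemma gen_in (A : {set G}) x : x \in A -> x \in gen A.
Proof. by move=> hx; apply/bigcapP => H /andP [_ /subsetP]; apply. Qed.

Lemma span_gen (A : {set G}) a b c u : a \in gen A -> b \in gen A -> c \in gen A -> lin a b c u \in gen A.
Proof.
move=> ha hb hc; case: u => [[u1 u2] u3]; rewrite /lin /=.
by apply: gen_add; [apply: gen_add|]; [case: u1|case: u2|case: u3]; rewrite /= ?gen0.
Qed.

Lemma card_span a b c : #|[set x | x \in span a b c]| = size (undup (span a b c)).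
Proof.
rewrite cardsE -(card_uniqP (undup_uniq _)); apply: eq_card => x.
by rewrite mem_undup.
Qed.

Lemma span_a a b c : a \in span a b c.
Proof. by apply/mapP; exists (true,false,false) => //; rewrite /lin /= ?addr0. Qed.
Lemma span_b a b c : b \in span a b c.
Proof. by apply/mapP; exists (false,true,false) => //; rewrite /lin /= ?add0r ?addr0. Qed.
Lemma span_c a b c : c \in span a b c.
Proof. by apply/mapP; exists (false,false,true) => //; rewrite /lin /= ?add0r. Qed.

Lemma span_sub_gen (A : {set G}) a b c : a \in gen A -> b \in gen A -> c \in gen A ->
  [set x | x \in span a b c] \subset gen A.
Proof.
move=> ha hb hc; apply/subsetP => x; rewrite inE => /mapP [u _ ->].
exact: span_gen.
Qed.

Lemma gen_sub_span (A : {set G}) a b c : A \subset [set x | x \in span a b c] -> gen A \subset [set x | x \in span a b c].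
Proof. by move=> h; apply: gen_sub => //; apply: span_closed. Qed.

Lemma dep2_size a b : dep2 a b -> (size (undup (span a b 0%R)) <= 2)%N.
Proof. by case: a => [[[] []] []]; case: b => [[[] []] []]. Qed.
Lemma ndep2_size a b : ~~ dep2 a b -> (4 <= size (undup (span a b 0%R)))%N.
Proof. by case: a => [[[] []] []]; case: b => [[[] []] []]. Qed.
Lemma dep3_size a b c : dep3 a b c -> (size (undup (span a b c)) <= 4)%N.
Proof. by case: a => [[[] []] []]; case: b => [[[] []] []]; case: c => [[[] []] []]. Qed.
Lemma ndep3_size a b c : ~~ dep3 a b c -> (8 <= size (undup (span a b c)))%N.
Proof. by case: a => [[[] []] []]; case: b => [[[] []] []]; case: c => [[[] []] []]. Qed.

Lemma G1 a b : dep2 a b -> (#|gen [set a; b]| <= 2)%N.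
Proof.
move=> h; apply: leq_trans (dep2_size h); rewrite -card_span; apply: subset_leq_card.
apply: gen_sub_span; apply/subsetP => x hx; rewrite in_set.
have : (x == a) || (x == b) by move: hx; rewrite !inE.
case/orP => /eqP ->.
  exact: span_a.
exact: span_b.
Qed.

Lemma G2 a b : ~~ dep2 a b -> (4 <= #|gen [set a; b]|)%N.
Proof.
move=> h; apply: leq_trans (ndep2_size h) _; rewrite -card_span; apply: subset_leq_card.
by apply: span_sub_gen; rewrite ?gen0 // gen_in // !inE ?eqxx ?orbT.
Qed.

Lemma G3 a b c : dep3 a b c -> (#|gen [set a; b; c]| <= 4)%N.
Proof.
move=> h; apply: leq_trans (dep3_size h); rewrite -card_span; apply: subset_leq_card.
apply: gen_sub_span; apply/subsetP => x hx; rewrite in_set.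
have : [|| x == a, x == b | x == c] by move: hx; rewrite !inE -orbA.
case/or3P => /eqP ->.
- exact: span_a.
- exact: span_b.
- exact: span_c.
Qed.

Lemma G4 a b c : ~~ dep3 a b c -> gen [set a; b; c] = [set: G].
Proof.
move=> h; apply/eqP; rewrite eqEcard subsetT /=.
have -> : #|[set: G]| = 8%N by rewrite cardsT !card_prod card_bool.
apply: leq_trans (ndep3_size h) _; rewrite -card_span; apply: subset_leq_card.
by apply: span_sub_gen; rewrite gen_in // !inE ?eqxx ?orbT.
Qed.

Lemma cardG : #|[set: G]| = 8%N.
Proof. by rewrite cardsT !card_prod card_bool. Qed.

Lemma gen2_small a b : (#|gen [set a; b]| <= 2)%N -> dep2 a b.
Proof. by move=> h; apply/negPn/negP => /G2 h'; have := leq_trans h' h. Qed.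
Lemma gen2_big a b : (4 <= #|gen [set a; b]|)%N -> ~~ dep2 a b.
Proof. by move=> h; apply/negP => /G1 h'; have := leq_trans h h'. Qed.
Lemma gen3_small a b c : (#|gen [set a; b; c]| <= 4)%N -> dep3 a b c.
Proof. by move=> h; apply/negPn/negP => /G4 h'; move: h; rewrite h' cardG. Qed.
Lemma gen3_big a b c : gen [set a; b; c] = [set: G] -> ~~ dep3 a b c.
Proof. by move=> h; apply/negP => /G3; rewrite h cardG. Qed.

Set Implicit Arguments. Unset Strict Implicit. Unset Printing Implicit Defensive.
Import GRing.Theory.
Local Open Scope ring_scope.

Fixpoint epsb (h : seq bool) : bool := if h is b :: h0 then b || epsb h0 else false.
Fixpoint sgb (n : nat) (h k : seq bool) : bool :=
  match n, h, k with
  | n'.+1, b :: h0, c :: k0 => if b then (if c then epsb h0 (+) sgb n' k0 h0 else sgb n' k0 h0)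
                        else (if c then epsb h0 (+) sgb n' h0 k0 else sgb n' h0 k0)
  | _, _, _ => false
  end.
Definition sbit (a b : G) : bool := sgb 3 [:: a.2; a.1.2; a.1.1] [:: b.2; b.1.2; b.1.1].

Lemma sbit2 a b : dep2 a b -> sbit a b = sbit b a.
Proof. by case: a => [[[] []] []]; case: b => [[[] []] []]. Qed.
Lemma sbit2n a b : ~~ dep2 a b -> sbit a b = ~~ sbit b a.
Proof. by case: a => [[[] []] []]; case: b => [[[] []] []]. Qed.
Lemma sbit3 a b c : dep3 a b c -> sbit a b (+) sbit (a + b) c = sbit b c (+) sbit a (b + c).
Proof. by case: a => [[[] []] []]; case: b => [[[] []] []]; case: c => [[[] []] []]. Qed.
Lemma sbit3n a b c : ~~ dep3 a b c -> sbit a b (+) sbit (a + b) c = ~~ (sbit b c (+) sbit a (b + c)).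
Proof. by case: a => [[[] []] []]; case: b => [[[] []] []]; case: c => [[[] []] []]. Qed.

Section Signs.
Variables (F : fieldType) (al be ga : F) (hal : al != 0) (hbe : be != 0) (hga : ga != 0).
Definition sgG (a b : G) : F := lsg (L3 hal hbe hga) (toH hal hbe hga a) (toH hal hbe hga b).
Definition sgn (x : bool) : F := if x then -1 else 1.
Definition mag (a b : G) : F := al ^+ (a.1.1 && b.1.1) * be ^+ (a.1.2 && b.1.2) * ga ^+ (a.2 && b.2).
Ltac unsg := rewrite /sgG /toH /=; do 3 (unfold sgl, epsl; simpl).

Lemma sg_form a b : sgG a b = sgn (sbit a b) * mag a b.
Proof. by case: a => [[[] []] []]; case: b => [[[] []] []]; unsg; rewrite /sgn /mag /=; ring. Qed.

Lemma sgnD x y : sgn x * sgn y = sgn (x (+) y).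
Proof. by case: x; case: y; rewrite /sgn /= ?mulN1r ?mul1r ?opprK. Qed.
Lemma sgnN x : sgn (~~ x) = - sgn x.
Proof. by case: x; rewrite /sgn /= ?opprK. Qed.

Lemma magC a b : mag a b = mag b a.
Proof. by rewrite /mag andbC [a.1.2 && _]andbC [a.2 && _]andbC. Qed.

Lemma expA (x : F) a b c : x ^+ (a && b) * x ^+ ((a (+) b) && c) = x ^+ (b && c) * x ^+ (a && (b (+) c)).
Proof. by rewrite -!exprD; congr (x ^+ _); case: a; case: b; case: c. Qed.

Lemma magA a b c : mag a b * mag (a + b) c = mag b c * mag a (b + c).
Proof.
case: a => [[a1 a2] a3]; case: b => [[b1 b2] b3]; case: c => [[c1 c2] c3]; rewrite /mag /=.
have r3 : forall x1 y1 z1 x2 y2 z2 : F, (x1 * y1 * z1) * (x2 * y2 * z2) = (x1 * x2) * (y1 * y2) * (z1 * z2).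
  by move=> *; ring.
by rewrite !r3 !expA.
Qed.

Lemma S1 a b : dep2 a b -> sgG a b = sgG b a.
Proof. by move=> h; rewrite !sg_form sbit2 // magC. Qed.
Lemma S2 a b : ~~ dep2 a b -> sgG a b = - sgG b a.
Proof. by move=> h; rewrite !sg_form sbit2n // sgnN magC mulNr. Qed.
Lemma S3 a b c : dep3 a b c -> sgG a b * sgG (a + b) c = sgG b c * sgG a (b + c).
Proof.
by move=> h; rewrite !sg_form mulrACA [X in _ = X]mulrACA !sgnD sbit3 // magA.
Qed.
Lemma S4 a b c : ~~ dep3 a b c -> sgG a b * sgG (a + b) c = - (sgG b c * sgG a (b + c)).
Proof.
by move=> h; rewrite !sg_form mulrACA [X in _ = - X]mulrACA !sgnD sbit3n // sgnN mulNr magA.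
Qed.
Lemma sgG_neq0 a b : sgG a b != 0.
Proof. exact: sgnz. Qed.
End Signs.

Set Implicit Arguments. Unset Strict Implicit. Unset Printing Implicit Defensive.
Import GRing.Theory.
Local Open Scope ring_scope.

Fixpoint mono_eqb (m1 m2 : mono) : bool :=
  match m1, m2 with
  | MVar i a, MVar j b => (i == j) && (a == b)
  | MMul p q, MMul p' q' => mono_eqb p p' && mono_eqb q q'
  | _, _ => false
  end.
Lemma mono_eqP : Equality.axiom mono_eqb.
Proof.
elim=> [i a|p IHp q IHq] [j b|p' q'] /=; try by constructor.
  by apply: (iffP andP) => [[/eqP -> /eqP ->]|[-> ->]].
by apply: (iffP andP) => [[/IHp -> /IHq ->]|[<- <-]]; split; [apply/IHp|apply/IHq].
Qed.
HB.instance Definition _ := hasDecEq.Build mono mono_eqP.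

Lemma eqMVar i a j b : (MVar i a == MVar j b) = (i == j) && (a == b). Proof. by []. Qed.
Lemma eqMMul p q p' q' : (MMul p q == MMul p' q') = (p == p') && (q == q'). Proof. by []. Qed.
Lemma eqMVM i a p q : (MVar i a == MMul p q) = false. Proof. by []. Qed.
Lemma eqMMV i a p q : (MMul p q == MVar i a) = false. Proof. by []. Qed.

Section Terms.
Variable F : fieldType.

Fixpoint mt (m : mono) : term F :=
  match m with MVar i a => TVar i a | MMul p q => TMul (mt p) (mt q) end.

Lemma coef_mt m m' : coef (mt m) m' = (m == m')%:R.
Proof.
elim: m m' => [i a|p IHp q IHq] [j b|p' q'] /=; rewrite ?eqMVar ?eqMMul ?eqMVM ?eqMMV //.
by rewrite IHp IHq; case: (p == p'); case: (q == q'); rewrite ?mulr1 ?mulr0.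
Qed.

Lemma homog_mt m : homog (mdeg m) (mt m).
Proof. by move=> m'; rewrite coef_mt; case: (eqVneq m m') => [->//|_] /=; rewrite eqxx. Qed.

Fixpoint supp (p : term F) : seq mono :=
  match p with
  | TVar i a => [:: MVar i a]
  | TZero => [::]
  | TAdd p q => supp p ++ supp q
  | TScale _ p => supp p
  | TMul p q => [seq MMul x y | x <- supp p, y <- supp q]
  end.

Lemma supp_coef p m : coef p m != 0 -> m \in supp p.
Proof.
elim: p m => [i a||p IHp q IHq|c p IHp|p IHp q IHq] m /=.
- case: m => [j b|m1 m2] h; last by rewrite eqxx in h.
  rewrite mem_seq1 eq_sym eqMVar; move: h.
  by case: (i == j); case: (a == b); rewrite //= eqxx.
- by rewrite eqxx.
- rewrite mem_cat; case: (eqVneq (coef p m) 0) => [->|/IHp ->//]; rewrite add0r => /IHq ->.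
  by rewrite orbT.
- by move=> h; apply: IHp; apply: contraNneq h => ->; rewrite mulr0.
- case: m => [j b|m1 m2] h; first by rewrite eqxx in h.
  apply: allpairs_f.
    by apply: IHp; apply: contraNneq h => ->; rewrite mul0r.
  by apply: IHq; apply: contraNneq h => ->; rewrite mulr0.
Qed.
End Terms.

Section Eval.
Variables (F : fieldType) (al be ga : F) (hal : al != 0) (hbe : be != 0) (hga : ga != 0).
Local Notation L := (L3 hal hbe hga).
Local Notation tH := (toH hal hbe hga).
Local Notation ev := (evalO al be ga).
Local Notation mulO := (mulO al be ga).
Ltac toL := rewrite -?(L3mul hal hbe hga) -?(L3sc hal hbe hga).

Definition embG (g : G) (s : F) : Oct F := lemb L (tH g) s.
Definition projG (g : G) (x : Oct F) : F := lproj L (tH g) x.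

Lemma scO0 c : scO c (0 : Oct F) = 0. Proof. toL; exact: (@lsc0 F L c). Qed.
Lemma scO0l (x : Oct F) : scO 0 x = 0. Proof. toL; exact: (@lsc0l F L x). Qed.
Lemma scOA c d (x : Oct F) : scO c (scO d x) = scO (c * d) x. Proof. toL; exact: (@scA F L c d x). Qed.
Lemma scODr c (x y : Oct F) : scO c (x + y) = scO c x + scO c y. Proof. toL; exact: (@scDr F L c x y). Qed.
Lemma scODl c d (x : Oct F) : scO (c + d) x = scO c x + scO d x. Proof. toL; exact: (@scDl F L c d x). Qed.
Lemma scO1 (x : Oct F) : scO 1 x = x. Proof. toL; exact: (@sc1 F L x). Qed.
Lemma mulO0 (x : Oct F) : mulO 0 x = 0. Proof. toL; exact: (@lmul0 F L x). Qed.
Lemma mulOr0 (x : Oct F) : mulO x 0 = 0. Proof. toL; exact: (@lmulr0 F L x). Qed.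
Lemma mulODl (x y z : Oct F) : mulO (x + y) z = mulO x z + mulO y z. Proof. toL; exact: (@mulDl F L x y z). Qed.
Lemma mulODr (x y z : Oct F) : mulO x (y + z) = mulO x y + mulO x z. Proof. toL; exact: (@mulDr F L x y z). Qed.
Lemma mulOZl c (x y : Oct F) : mulO (scO c x) y = scO c (mulO x y). Proof. toL; exact: (@mulZl F L c x y). Qed.
Lemma mulOZr c (x y : Oct F) : mulO x (scO c y) = scO c (mulO x y). Proof. toL; exact: (@mulZr F L c x y). Qed.
Lemma embGD g s u : embG g s + embG g u = embG g (s + u). Proof. exact: (@embD F L (tH g) s u). Qed.
Lemma embG0 g : embG g 0 = 0. Proof. exact: (@lemb0 F L (tH g)). Qed.
Lemma scOE c g s : scO c (embG g s) = embG g (c * s). Proof. toL; exact: (@scE F L c (tH g) s). Qed.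
Lemma mulOE a b s u : mulO (embG a s) (embG b u) = embG (a + b) (sgG hal hbe hga a b * (s * u)).
Proof. rewrite /embG -toH_add; toL; exact: (@mulE F L (tH a) (tH b) s u). Qed.
Lemma tH_inj : injective tH.
Proof. by case=> [[? ?] ?] [[? ?] ?] [-> -> ->]. Qed.
Lemma projGE d g s : projG d (embG g s) = if d == g then s else 0.
Proof. by rewrite /projG /embG (projE L) (inj_eq tH_inj). Qed.
Lemma projGD d (x y : Oct F) : projG d (x + y) = projG d x + projG d y. Proof. exact: (@projD F L (tH d) x y). Qed.
Lemma projG0 d : projG d 0 = 0. Proof. exact: (@lproj0 F L (tH d)). Qed.
Lemma projGZ d c (x : Oct F) : projG d (scO c x) = c * projG d x. Proof. toL; exact: (@projZ F L (tH d) c x). Qed.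
Lemma homOP g (x : Oct F) : homO g x -> x = embG g (projG g x).
Proof. by rewrite (L3hom hal hbe hga) (homP L) => /eqP. Qed.
Lemma homO_emb g s : homO g (embG g s).
Proof. by rewrite (L3hom hal hbe hga) (homP L) /embG (projE L) eqxx. Qed.

Lemma mulO_suml I (r : seq I) (P : pred I) (f : I -> Oct F) y :
  mulO (\sum_(i <- r | P i) f i) y = \sum_(i <- r | P i) mulO (f i) y.
Proof. exact: (big_morph (fun x => mulO x y) (fun x z => mulODl x z y) (mulO0 y)). Qed.
Lemma mulO_sumr I (r : seq I) (P : pred I) (f : I -> Oct F) y :
  mulO y (\sum_(i <- r | P i) f i) = \sum_(i <- r | P i) mulO y (f i).
Proof. exact: (big_morph (fun x => mulO y x) (fun x z => mulODr y x z) (mulOr0 y)). Qed.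
Lemma scO_sum I (r : seq I) (P : pred I) (f : I -> Oct F) c :
  scO c (\sum_(i <- r | P i) f i) = \sum_(i <- r | P i) scO c (f i).
Proof. exact: (big_morph (scO c) (scODr c) (scO0 c)). Qed.
Lemma embG_sum I (r : seq I) (P : pred I) (f : I -> F) g :
  embG g (\sum_(i <- r | P i) f i) = \sum_(i <- r | P i) embG g (f i).
Proof. exact: (big_morph (embG g) (fun x y => esym (embGD g x y)) (embG0 g)). Qed.
Lemma projG_sum I (r : seq I) (P : pred I) (f : I -> Oct F) g :
  projG g (\sum_(i <- r | P i) f i) = \sum_(i <- r | P i) projG g (f i).
Proof. exact: (big_morph (projG g) (projGD g) (projG0 g)). Qed.

Definition lc v (S : seq mono) (w : mono -> F) : Oct F :=
  \sum_(m <- S) scO (w m) (ev v (mt F m)).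

Lemma lc_filter v S w : lc v S w = \sum_(m <- [seq m <- S | w m != 0]) scO (w m) (ev v (mt F m)).
Proof.
rewrite big_filter big_mkcond /lc; apply: eq_bigr => m _.
by case: eqP => [->|]; rewrite ?scO0l.
Qed.

Lemma lc_ext v w S1 S2 : uniq S1 -> uniq S2 -> (forall m, w m != 0 -> m \in S1) ->
  (forall m, w m != 0 -> m \in S2) -> lc v S1 w = lc v S2 w.
Proof.
move=> u1 u2 h1 h2; rewrite !lc_filter; apply: perm_big.
apply: uniq_perm; rewrite ?filter_uniq // => m; rewrite !mem_filter.
by case: (boolP (w m != 0)) => //= h; rewrite h1 ?h2.
Qed.

Lemma eval_repr v p : ev v p = lc v (undup (supp p)) (coef p).
Proof.
elim: p => [i a||p IHp q IHq|c p IHp|p IHp q IHq] /=.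
- by rewrite /lc /= big_seq1 /= !eqxx scO1.
- by rewrite /lc big_nil.
- rewrite IHp IHq.
  set S := undup (supp p ++ supp q).
  have uS : uniq S by apply: undup_uniq.
  rewrite (@lc_ext v (coef p) _ S) ?undup_uniq //; last first.
    by move=> m /supp_coef h; rewrite mem_undup mem_cat h.
    by move=> m /supp_coef h; rewrite mem_undup.
  rewrite (@lc_ext v (coef q) _ S) ?undup_uniq //; last first.
    by move=> m /supp_coef h; rewrite mem_undup mem_cat h orbT.
    by move=> m /supp_coef h; rewrite mem_undup.
  by rewrite /lc -big_split /=; apply: eq_bigr => m _; rewrite scODl.
- rewrite IHp /lc scO_sum; apply: eq_bigr => m _; by rewrite scOA.
- rewrite IHp IHq /lc mulO_suml.
  set S := undup [seq MMul x y | x <- supp p, y <- supp q].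
  set S' := [seq MMul x y | x <- undup (supp p), y <- undup (supp q)].
  have uS' : uniq S'.
    apply: allpairs_uniq; rewrite ?undup_uniq //.
    by move=> [x1 y1] [x2 y2] _ _ /= [-> ->].
  rewrite -/(lc v S (fun m => coef (TMul p q) m)).
  rewrite (@lc_ext v _ S S') ?undup_uniq //; last first.
    case=> [//|m1 m2] /=; first by rewrite eqxx.
    move=> h; apply: allpairs_f; rewrite mem_undup; apply: supp_coef.
      by apply: contraNneq h => ->; rewrite mul0r.
    by apply: contraNneq h => ->; rewrite mulr0.
    by move=> m /supp_coef; rewrite mem_undup.
  rewrite /lc big_allpairs_dep /=; apply: eq_bigr => m1 _.
  rewrite mulOZl mulO_sumr scO_sum; apply: eq_bigr => m2 _.
  by rewrite mulOZr scOA mulrC.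
Qed.
End Eval.

Set Implicit Arguments. Unset Strict Implicit. Unset Printing Implicit Defensive.
Import GRing.Theory.
Local Open Scope ring_scope.

Section Easy.
Variables (F : fieldType) (al be ga : F) (hal : al != 0) (hbe : be != 0) (hga : ga != 0).
Local Notation ev := (evalO al be ga).
Local Notation mulO := (mulO al be ga).
Local Notation embG := (embG hal hbe hga).
Local Notation projG := (projG hal hbe hga).
Local Notation sg := (sgG hal hbe hga).

Fixpoint cval (m : mono) : F :=
  match m with MVar _ _ => 1 | MMul p q => sg (mdeg p) (mdeg q) * (cval p * cval q) end.
Fixpoint tprod (t : nat -> G -> F) (m : mono) : F :=
  match m with MVar i a => t i a | MMul p q => tprod t p * tprod t q end.

Lemma ev_mono t m : ev (fun i a => embG a (t i a)) (mt F m) = embG (mdeg m) (cval m * tprod t m).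
Proof.
elim: m => [i a|p IHp q IHq] /=; first by rewrite mul1r.
by rewrite IHp IHq mulOE; congr embG; ring.
Qed.

Lemma ev_ext v v' p : (forall i a, v i a = v' i a) -> ev v p = ev v' p.
Proof. by move=> h; elim: p => //= [p -> q ->|c p ->|p -> q ->]. Qed.

Lemma ev_homog v a p : (forall i b, homO b (v i b)) -> homog a p -> homO a (ev v p).
Proof.
move=> hv hp; pose t i b := projG b (v i b).
rewrite (@ev_ext v (fun i b => embG b (t i b))); last by move=> i b; apply: (homOP hal hbe hga).
rewrite (eval_repr hal hbe hga) /lc.
rewrite (eq_bigr (fun m => embG a (coef p m * (cval m * tprod t m)))); last first.
  move=> m _; rewrite ev_mono (scOE hal hbe hga).
  by case: (eqVneq (coef p m) 0) => [->|/hp ->]; rewrite ?mul0r ?(embG0 hal hbe hga).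
by rewrite -(embG_sum hal hbe hga); apply: homO_emb.
Qed.

Lemma peq_eval v p q : peq p q -> ev v p = ev v q.
Proof.
move=> h; rewrite !(eval_repr hal hbe hga).
set S := undup (supp p ++ supp q).
rewrite (@lc_ext F al be ga hal hbe hga v (coef p) _ S) ?undup_uniq //; last first.
  by move=> m /supp_coef hm; rewrite mem_undup mem_cat hm.
  by move=> m /supp_coef hm; rewrite mem_undup.
rewrite (@lc_ext F al be ga hal hbe hga v (coef q) _ S) ?undup_uniq //; last first.
  by move=> m /supp_coef hm; rewrite mem_undup mem_cat hm orbT.
  by move=> m /supp_coef hm; rewrite mem_undup.
by rewrite /lc; apply: eq_bigr => m _; rewrite h.
Qed.

Lemma ev_subst s v p : ev v (subst s p) = ev (fun i a => ev v (s i a)) p.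
Proof. by elim: p => //= [p -> q ->|c p ->|p -> q ->]. Qed.

Definition Ident (f : term F) := graded_identity_O al be ga f.

Lemma Ident_closed : TClosed Ident.
Proof.
split; [split| | | split|].
- by move=> p q hpq hp v hv; rewrite -(peq_eval v hpq) hp.
- by [].
- by move=> p q hp hq v hv /=; rewrite hp ?hq ?addr0.
- by move=> c p hp v hv /=; rewrite hp ?(scO0 hal hbe hga).
- by move=> p q hp v hv /=; rewrite hp ?(mulO0 hal hbe hga).
- by move=> p q hq v hv /=; rewrite hq ?(mulOr0 hal hbe hga).
- move=> s hs p hp v hv; rewrite ev_subst; apply: hp => i a.
  exact: ev_homog.
Qed.

Lemma scalA (x1 x2 y1 y2 s u w : F) : x1 * x2 = y1 * y2 ->
  x2 * (x1 * (s * u) * w) + -1 * (y2 * (s * (y1 * (u * w)))) = 0.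
Proof.
move=> h; transitivity ((x1 * x2 - y1 * y2) * (s * u * w)); first by ring.
by rewrite h subrr mul0r.
Qed.
Lemma scalAn (x1 x2 y1 y2 s u w : F) : x1 * x2 = - (y1 * y2) ->
  x2 * (x1 * (s * u) * w) + (y2 * (s * (y1 * (u * w)))) = 0.
Proof.
move=> h; transitivity ((x1 * x2 + y1 * y2) * (s * u * w)); first by ring.
by rewrite h addNr mul0r.
Qed.

Lemma scalC (x s u : F) : x * (s * u) + -1 * (x * (u * s)) = 0.
Proof. by rewrite mulN1r [u * s]mulrC subrr. Qed.
Lemma scalJ (x s u : F) : - x * (s * u) + x * (u * s) = 0.
Proof. by rewrite mulNr [u * s]mulrC addNr. Qed.

Lemma gens_ident f : oct_gens f -> Ident f.
Proof.
have E0 := embG0 hal hbe hga.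
case=> [[i [j [a [b [_ [hs ->]]]]]]|[[i [j [a [b [_ [hs ->]]]]]]|[[i [j [k [a [b [c [_ _ _ hs ->]]]]]]]|[i [j [k [a [b [c [_ _ _ hs ->]]]]]]]]]] v hv /=.
- rewrite (homOP hal hbe hga (hv i a)) (homOP hal hbe hga (hv j b)).
  rewrite !mulOE (scOE hal hbe hga) [b + a]addrC (embGD hal hbe hga).
  by rewrite (S1 hal hbe hga (gen2_small hs)) scalC E0.
- rewrite (homOP hal hbe hga (hv i a)) (homOP hal hbe hga (hv j b)).
  rewrite !mulOE [b + a]addrC (embGD hal hbe hga).
  by rewrite (S2 hal hbe hga (gen2_big hs)) scalJ E0.
- rewrite (homOP hal hbe hga (hv i a)) (homOP hal hbe hga (hv j b)) (homOP hal hbe hga (hv k c)).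
  rewrite !mulOE (scOE hal hbe hga) addrA (embGD hal hbe hga).
  by rewrite (scalA _ _ _ (S3 hal hbe hga (gen3_small hs))) E0.
- rewrite (homOP hal hbe hga (hv i a)) (homOP hal hbe hga (hv j b)) (homOP hal hbe hga (hv k c)).
  rewrite !mulOE addrA (embGD hal hbe hga).
  by rewrite (scalAn _ _ _ (S4 hal hbe hga (gen3_big hs))) E0.
Qed.

Lemma easy_dir f : TGen (@oct_gens F) f -> Ident f.
Proof. by move=> h; apply: h; [apply: Ident_closed|apply: gens_ident]. Qed.
End Easy.

Set Implicit Arguments. Unset Strict Implicit. Unset Printing Implicit Defensive.
Import GRing.Theory.
Local Open Scope ring_scope.

Section TC.
Variable F : fieldType.
Variable I : term F -> Prop.
Hypothesis hI : TClosed I.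
Lemma TC_peq p q : peq p q -> I p -> I q. Proof. by case: hI => [[h _] _ _ _ _]; apply: h. Qed.
Lemma TC_zero : I TZero. Proof. by case: hI => [[_ h] _ _ _ _]. Qed.
Lemma TC_add p q : I p -> I q -> I (TAdd p q). Proof. by case: hI => [_ h _ _ _]; apply: h. Qed.
Lemma TC_scale c p : I p -> I (TScale c p). Proof. by case: hI => [_ _ h _ _]; apply: h. Qed.
Lemma TC_mull p q : I p -> I (TMul p q). Proof. by case: hI => [_ _ _ [h _] _]; apply: h. Qed.
Lemma TC_mulr p q : I q -> I (TMul p q). Proof. by case: hI => [_ _ _ [_ h] _]; apply: h. Qed.
Lemma TC_subst s p : graded_endo s -> I p -> I (subst s p). Proof. by case: hI => [_ _ _ _ h] hs hp; apply: h hs p hp. Qed.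
End TC.

Section TGenC.
Variables (F : fieldType) (S : term F -> Prop).
Lemma TGen_closed : TClosed (TGen S).
Proof.
split; [split| | | split|].
- by move=> p q hpq hp J hJ hS; apply: (TC_peq hJ hpq); apply: hp.
- by move=> J hJ _; apply: TC_zero.
- by move=> p q hp hq J hJ hS; apply: TC_add (hp J hJ hS) (hq J hJ hS).
- by move=> c p hp J hJ hS; apply: TC_scale (hp J hJ hS).
- by move=> p q hp J hJ hS; apply: TC_mull (hp J hJ hS).
- by move=> p q hq J hJ hS; apply: TC_mulr (hq J hJ hS).
- by move=> s hs p hp J hJ hS; apply: TC_subst (hp J hJ hS).
Qed.
Lemma TGen_in p : S p -> TGen S p.
Proof. by move=> hp J _ hS; apply: hS. Qed.
End TGenC.

Section R.
Variable F : fieldType.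
Local Notation J := (TGen (@oct_gens F)).
Local Notation JC := (TGen_closed (@oct_gens F)).
Definition R (p q : term F) := exists lam : F, J (TAdd p (TScale lam q)).

Lemma R_refl p : R p p.
Proof.
exists (-1); apply: (TC_peq JC _ (TC_zero JC)) => m /=.
by rewrite mulN1r subrr.
Qed.

Lemma R_trans p q r : R p q -> R q r -> R p r.
Proof.
move=> [l hl] [u hu]; exists (- (l * u)).
have := TC_add JC hl (TC_scale JC (- l) hu)=> hh; apply: (TC_peq JC _ hh) => m /=.
move: (coef p m) (coef q m) (coef r m) => x y z; ring.
Qed.

Lemma R_mull r p q : R p q -> R (TMul r p) (TMul r q).
Proof.
move=> [l hl]; exists l; have := TC_mulr JC r hl=> hh; apply: (TC_peq JC _ hh) => [[i a|m1 m2]] /=.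
  by rewrite mulr0 addr0.
move: (coef r m1) (coef p m2) (coef q m2) => x y z; ring.
Qed.

Lemma R_mulr r p q : R p q -> R (TMul p r) (TMul q r).
Proof.
move=> [l hl]; exists l; have := TC_mull JC r hl=> hh; apply: (TC_peq JC _ hh) => [[i a|m1 m2]] /=.
  by rewrite mulr0 addr0.
move: (coef r m2) (coef p m1) (coef q m1) => x y z; ring.
Qed.

Lemma homog_var k c : homog c (@TVar F k c).
Proof.
case=> [j b|m1 m2] /=; last by rewrite eqxx.
by case: (k == j); case: (eqVneq c b) => [->|] //=; rewrite eqxx.
Qed.

Definition s2 (p q : term F) (a b : G) (k : nat) (c : G) : term F :=
  if (k == 0%N) && (c == a) then p else if (k == 1%N) && (c == b) then q else TVar k c.
Definition s3 (p q r : term F) (a b d : G) (k : nat) (c : G) : term F :=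
  if (k == 0%N) && (c == a) then p else if (k == 1%N) && (c == b) then q
  else if (k == 2%N) && (c == d) then r else TVar k c.

Lemma s2_endo p q a b : homog a p -> homog b q -> graded_endo (s2 p q a b).
Proof.
move=> hp hq k c; rewrite /s2.
case: (boolP ((k == 0%N) && (c == a))) => [/andP [_ /eqP ->] //|_].
case: (boolP ((k == 1%N) && (c == b))) => [/andP [_ /eqP ->] //|_].
exact: homog_var.
Qed.

Lemma s3_endo p q r a b d : homog a p -> homog b q -> homog d r -> graded_endo (s3 p q r a b d).
Proof.
move=> hp hq hr k c; rewrite /s3.
case: (boolP ((k == 0%N) && (c == a))) => [/andP [_ /eqP ->] //|_].
case: (boolP ((k == 1%N) && (c == b))) => [/andP [_ /eqP ->] //|_].
case: (boolP ((k == 2%N) && (c == d))) => [/andP [_ /eqP ->] //|_].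
exact: homog_var.
Qed.

Lemma R_comm p q a b : homog a p -> homog b q -> R (TMul p q) (TMul q p).
Proof.
move=> hp hq; have he := s2_endo hp hq.
have hd01 : (0%N, a) <> (1%N, b) by case.
case: (boolP (dep2 a b)) => hd.
  have hg : @oct_gens F (tcomm (TVar 0 a) (TVar 1 b)).
    by left; exists 0%N, 1%N, a, b; split => //; split => //; apply: G1.
  have := TC_subst JC he (TGen_in hg); rewrite /= /s2 /= !eqxx /= => h.
  by exists (-1).
have hg : @oct_gens F (tjord (TVar 0 a) (TVar 1 b)).
  by right; left; exists 0%N, 1%N, a, b; split => //; split => //; apply: G2.
have := TC_subst JC he (TGen_in hg); rewrite /= /s2 /= !eqxx /= => h.
exists 1; apply: (TC_peq JC _ h) => m /=; by rewrite mul1r.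
Qed.

Lemma J_assoc p q r a b d : homog a p -> homog b q -> homog d r ->
  exists lam : F, lam * lam = 1 /\ J (TAdd (TMul (TMul p q) r) (TScale lam (TMul p (TMul q r)))).
Proof.
move=> hp hq hr; have he := s3_endo hp hq hr.
have h01 : (0%N, a) <> (1%N, b) by case.
have h02 : (0%N, a) <> (2%N, d) by case.
have h12 : (1%N, b) <> (2%N, d) by case.
case: (boolP (dep3 a b d)) => hd.
  have hg : @oct_gens F (tassoc (TVar 0 a) (TVar 1 b) (TVar 2 d)).
    by right; right; left; exists 0%N, 1%N, 2%N, a, b, d; split => //; apply: G3.
  have := TC_subst JC he (TGen_in hg); rewrite /= /s3 /= !eqxx /= => h.
  by exists (-1); split => //; rewrite mulrNN mul1r.
have hg : @oct_gens F (tantiassoc (TVar 0 a) (TVar 1 b) (TVar 2 d)).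
  by right; right; right; exists 0%N, 1%N, 2%N, a, b, d; split => //; apply: G4.
have := TC_subst JC he (TGen_in hg); rewrite /= /s3 /= !eqxx /= => h.
exists 1; split; first by rewrite mul1r.
by apply: (TC_peq JC _ h) => m /=; rewrite mul1r.
Qed.

Lemma R_assoc p q r a b d : homog a p -> homog b q -> homog d r ->
  R (TMul (TMul p q) r) (TMul p (TMul q r)) /\ R (TMul p (TMul q r)) (TMul (TMul p q) r).
Proof.
move=> hp hq hr; have [l [hl h]] := J_assoc hp hq hr; split; first by exists l.
exists l; have := TC_scale JC l h=> hh; apply: (TC_peq JC _ hh) => m /=.
by rewrite mulrDr mulrA hl mul1r addrC.
Qed.
End R.

Set Implicit Arguments. Unset Strict Implicit. Unset Printing Implicit Defensive.
Import GRing.Theory.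
Local Open Scope ring_scope.

Definition K := (nat * G)%type.
Fixpoint comb (x : K) (l : seq K) : mono :=
  if l is y :: l' then MMul (MVar x.1 x.2) (comb y l') else MVar x.1 x.2.
Definition combL (l : seq K) : mono := if l is x :: l' then comb x l' else MVar 0 0.
Fixpoint fl (m : mono) : K * seq K :=
  match m with
  | MVar i a => ((i, a), [::])
  | MMul p q => ((fl p).1, (fl p).2 ++ (fl q).1 :: (fl q).2)
  end.
Definition lv (m : mono) : seq K := (fl m).1 :: (fl m).2.
Definition gcode (g : G) : nat := (g.1.1 * 4 + g.1.2 * 2 + g.2)%N.
Definition kcode (x : K) : nat := (x.1 * 8 + gcode x.2)%N.
Definition kle : rel K := fun x y => (kcode x <= kcode y)%N.

Lemma gcode_lt g : (gcode g < 8)%N. Proof. by case: g => [[[] []] []]. Qed.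
Lemma gcode_inj : injective gcode.
Proof. by case=> [[[] []] []]; case=> [[[] []] []]. Qed.
Lemma kcode_inj : injective kcode.
Proof.
case=> i g [j h]; rewrite /kcode /= => e.
have hg := gcode_lt g; have hh := gcode_lt h.
have ij : i = j by lia.
by subst j; congr pair; apply: gcode_inj; lia.
Qed.
Lemma kle_total : total kle. Proof. by move=> x y; apply: leq_total. Qed.
Lemma kle_trans : transitive kle. Proof. by move=> x y z; apply: leq_trans. Qed.
Lemma kle_anti : antisymmetric kle.
Proof. by move=> x y /andP [h1 h2]; apply: kcode_inj; apply/eqP; rewrite eqn_leq; apply/andP. Qed.

Definition N (m : mono) : mono := combL (sort kle (lv m)).

Lemma fl_comb x l : fl (comb x l) = (x, l).
Proof. elim: l x => [|y l IH] [i a] //=; by rewrite IH. Qed.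
Lemma lv_combL l : l != [::] -> lv (combL l) = l.
Proof. by case: l => // x l _; rewrite /lv /= fl_comb. Qed.
Lemma sort_nil m : sort kle (lv m) != [::].
Proof. by rewrite -size_eq0 size_sort. Qed.
Lemma lv_N m : lv (N m) = sort kle (lv m).
Proof. by rewrite /N lv_combL // sort_nil. Qed.
Lemma lv_MMul p q : lv (MMul p q) = lv p ++ lv q. Proof. by []. Qed.

Lemma N_eq m m' : (N m == N m') = perm_eq (lv m) (lv m').
Proof.
apply/eqP/idP => [e|hp].
  apply/(perm_sortP kle_total kle_trans kle_anti); by rewrite -!lv_N e.
by rewrite /N (perm_sortP kle_total kle_trans kle_anti _ _ hp).
Qed.

Lemma mdeg_lv m : mdeg m = \sum_(x <- lv m) x.2.
Proof.
elim: m => [i a|p IHp q IHq]; first by rewrite /lv /= big_seq1.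
by rewrite lv_MMul big_cat /= IHp IHq.
Qed.
Lemma mdeg_N m : mdeg (N m) = mdeg m.
Proof.
have hps : perm_eq (sort kle (lv m)) (lv m) by rewrite perm_sort.
by rewrite !mdeg_lv lv_N; apply: (perm_big (lv m) hps).
Qed.

Section NF.
Variable F : fieldType.
Definition Rm (m m' : mono) := R (mt F m) (mt F m').
Lemma Rm_refl m : Rm m m. Proof. exact: R_refl. Qed.
Lemma Rm_trans m1 m2 m3 : Rm m1 m2 -> Rm m2 m3 -> Rm m1 m3. Proof. exact: R_trans. Qed.
Lemma RmA m1 m2 m3 : Rm (MMul (MMul m1 m2) m3) (MMul m1 (MMul m2 m3)).
Proof. rewrite /Rm /=; exact: (R_assoc (@homog_mt F m1) (@homog_mt F m2) (@homog_mt F m3)).1. Qed.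
Lemma RmA' m1 m2 m3 : Rm (MMul m1 (MMul m2 m3)) (MMul (MMul m1 m2) m3).
Proof. rewrite /Rm /=; exact: (R_assoc (@homog_mt F m1) (@homog_mt F m2) (@homog_mt F m3)).2. Qed.
Lemma RmC m1 m2 : Rm (MMul m1 m2) (MMul m2 m1).
Proof. rewrite /Rm /=; exact: (R_comm (@homog_mt F m1) (@homog_mt F m2)). Qed.
Lemma Rm_mull m p q : Rm p q -> Rm (MMul m p) (MMul m q). Proof. rewrite /Rm /=; exact: R_mull. Qed.
Lemma Rm_mulr m p q : Rm p q -> Rm (MMul p m) (MMul q m). Proof. rewrite /Rm /=; exact: R_mulr. Qed.

Lemma comb_cat x l1 y l2 : Rm (MMul (comb x l1) (comb y l2)) (comb x (l1 ++ y :: l2)).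
Proof.
elim: l1 x => [|z l1 IH] x /=; first exact: Rm_refl.
apply: Rm_trans (RmA _ _ _) _; apply: Rm_mull; exact: IH.
Qed.

Lemma comb_swap x y l : Rm (comb x (y :: l)) (comb y (x :: l)).
Proof.
case: l => [|z l] /=; first exact: RmC.
apply: Rm_trans (RmA' _ _ _) _.
apply: Rm_trans (Rm_mulr _ (RmC _ _)) _.
exact: RmA.
Qed.

Lemma comb_move x y l1 l2 : Rm (comb x (l1 ++ y :: l2)) (comb y (x :: l1 ++ l2)).
Proof.
elim: l1 x => [|z l1 IH] x /=; first exact: comb_swap.
apply: Rm_trans (Rm_mull _ (IH z)) _.
exact: (comb_swap x y (z :: l1 ++ l2)).
Qed.

Lemma comb_perm n x y l l' : size l = n -> perm_eq (x :: l) (y :: l') -> Rm (comb x l) (comb y l').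
Proof.
elim: n x y l l' => [|n IH] x y l l' hs hp.
  case: l hs hp => // _ hp; have := perm_size hp.
  case: l' hp => [|w l'] hp hsz; last by move: hsz => /= [].
  have : y \in [:: x] by rewrite (perm_mem hp) inE eqxx.
  by rewrite inE => /eqP ->; apply: Rm_refl.
case: (eqVneq x y) => [exy|hxy].
  subst y; have hp' : perm_eq l l' by rewrite -(perm_cons x).
  case: l hs hp hp' => // z l [hs] _ hp'; have := perm_size hp'; case: l' hp' => // w l' hp' _.
  by apply: Rm_mull; apply: IH hs hp'.
have hy : y \in l.
  by have := perm_mem hp y; rewrite !inE eqxx /= eq_sym (negbTE hxy) /= => ->.
case/splitPr: hy hs hp => l1 l2 hs hp.
have hp2 : perm_eq (x :: l1 ++ l2) l'.
  rewrite -(perm_cons y); apply: perm_trans _ hp.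
  by apply/permP => a /=; rewrite !count_cat /=; lia.
apply: Rm_trans (comb_move _ _ _ _) _.
clear hp; have := perm_size hp2; case: l' hp2 => [|w l'] hp2 hsz; first by [].
apply: Rm_mull; apply: IH hp2.
by move: hs; rewrite !size_cat /=; lia.
Qed.

Lemma Rm_fl m : Rm m (comb (fl m).1 (fl m).2).
Proof.
elim: m => [i a|p IHp q IHq] /=; first exact: Rm_refl.
apply: Rm_trans (Rm_mulr _ IHp) _.
apply: Rm_trans (Rm_mull _ IHq) _.
exact: comb_cat.
Qed.

Lemma Rm_N m : Rm m (N m).
Proof.
apply: Rm_trans (Rm_fl m) _; rewrite /N.
have hp : perm_eq (lv m) (sort kle (lv m)) by rewrite perm_sym perm_sort.
move: hp (sort_nil m); case: (sort kle (lv m)) => // h t hp _ /=.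
exact: (comb_perm (erefl _) hp).
Qed.
End NF.

Set Implicit Arguments. Unset Strict Implicit. Unset Printing Implicit Defensive.
Import GRing.Theory.
Local Open Scope ring_scope.

Section Main.
Variables (F : fieldType) (Finf : forall s : seq F, exists x : F, x \notin s).
Variables (al be ga : F) (hal : al != 0) (hbe : be != 0) (hga : ga != 0).
Local Notation ev := (evalO al be ga).
Local Notation embG := (embG hal hbe hga).
Local Notation projG := (projG hal hbe hga).
Local Notation cval := (cval hal hbe hga).
Local Notation J := (TGen (@oct_gens F)).
Local Notation JC := (TGen_closed (@oct_gens F)).

Lemma tprod1 m : tprod (fun _ _ => (1 : F)) m = 1.
Proof. by elim: m => //= p -> q ->; rewrite mulr1. Qed.

Lemma tprod_K (t : K -> F) m : tprod (fun i a => t (i, a)) m = \prod_(x <- lv m) t x.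
Proof.
elim: m => [i a|p IHp q IHq]; first by rewrite /lv /= big_seq1.
by rewrite lv_MMul big_cat /= IHp IHq.
Qed.

Lemma cval_neq0 m : cval m != 0.
Proof. by elim: m => //= [_ _|p IHp q IHq]; rewrite ?oner_neq0 // !mulf_neq0 ?sgG_neq0. Qed.

Lemma embG_inj d x y : embG d x = embG d y -> x = y.
Proof. by move/(congr1 (projG d)); rewrite !(projGE hal hbe hga) eqxx. Qed.

Lemma scON1 (x : Oct F) : scO (-1) x = - x.
Proof.
apply/eqP; rewrite -addr_eq0 -{2}(scO1 hal hbe hga x) -(scODl hal hbe hga) addNr.
by rewrite (scO0l hal hbe hga).
Qed.

Definition kap m := cval m / cval (N m).

Lemma RmN m : J (TAdd (mt F m) (TScale (- kap m) (mt F (N m)))).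
Proof.
have [l hl] := Rm_N F m.
have hid := easy_dir hal hbe hga hl.
have := hid (fun i a => embG a 1) (fun i a => homO_emb hal hbe hga a 1).
rewrite /= (ev_mono hal hbe hga (fun _ _ => 1)) (ev_mono hal hbe hga (fun _ _ => 1)).
rewrite !tprod1 !mulr1 mdeg_N (scOE hal hbe hga) (embGD hal hbe hga) -(embG0 hal hbe hga (mdeg m)).
move/embG_inj => e.
have el : l = - kap m.
  apply: (mulIf (cval_neq0 (N m))); rewrite mulNr /kap divfK ?cval_neq0 //.
  by apply/eqP; rewrite -addr_eq0 addrC e.
by rewrite -el.
Qed.

Definition tsum (l : seq (term F)) : term F := foldr (@TAdd F) TZero l.
Lemma coef_tsum l n : coef (tsum l) n = \sum_(p <- l) coef p n.
Proof. by elim: l => [|p l IH] /=; rewrite ?big_nil ?big_cons ?IH. Qed.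
Lemma ev_tsum v l : ev v (tsum l) = \sum_(p <- l) ev v p.
Proof. by elim: l => [|p l IH] /=; rewrite ?big_nil ?big_cons ?IH. Qed.
Lemma J_tsum (T : Type) (f : T -> term F) S : (forall m, J (f m)) -> J (tsum (map f S)).
Proof. move=> h; elim: S => [|m S IH] /=; first exact: (TC_zero JC). exact: (TC_add JC (h m) IH). Qed.

Lemma coef_expand (f : term F) n : coef f n = \sum_(m <- undup (supp f)) coef f m * (m == n)%:R.
Proof.
case: (boolP (n \in undup (supp f))) => hn.
  rewrite (bigD1_seq n) ?undup_uniq //= eqxx mulr1 big1 ?addr0 //.
  by move=> m /negbTE ->; rewrite mulr0.
have -> : coef f n = 0.
  by apply/eqP; apply: contraNT hn => /supp_coef; rewrite mem_undup.
rewrite big_seq big1 // => m hm; case: (eqVneq m n) => [e|]; last by rewrite mulr0.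
by move: hn; rewrite -e hm.
Qed.

Lemma hard_dir (f : term F) : Ident al be ga f -> J f.
Proof.
move=> hf.
set S := undup (supp f).
pose g := tsum [seq TScale (coef f m * kap m) (mt F (N m)) | m <- S].
pose h := tsum [seq TScale (coef f m) (TAdd (mt F m) (TScale (- kap m) (mt F (N m)))) | m <- S].
have Jh : J h by apply: J_tsum => m; exact: (TC_scale JC _ (RmN m)).
have hfg : peq h (TAdd f (TScale (-1) g)).
  move=> n /=; rewrite !coef_tsum !big_map (coef_expand f n) -/S mulr_sumr -big_split /=.
  apply: eq_bigr => m _ /=; rewrite !coef_mt.
  move: (coef f m) (kap m) ((m == n)%:R : F) ((N m == n)%:R : F) => a b c d; ring.
have Jfg : J (TAdd f (TScale (-1) g)) := TC_peq JC hfg Jh.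
have Ig : Ident al be ga g.
  move=> v hv; have := easy_dir hal hbe hga Jfg hv; rewrite /= (hf v hv) add0r scON1.
  by move/eqP; rewrite oppr_eq0 => /eqP.
have Jg : J g.
  apply: (TC_peq JC _ (TC_zero JC)) => n /=.
  rewrite coef_tsum big_map.
  rewrite (eq_bigr (fun m => (coef f m * kap m) * (N m == n)%:R)); last first.
    by move=> m _ /=; rewrite coef_mt.
  case: (boolP (has (fun m => N m == n) S)) => [/hasP [m0 _ /eqP e0]|/hasPn hn]; last first.
    by rewrite big_seq big1 // => m hm; rewrite (negbTE (hn m hm)) mulr0.
  subst n.
  pose d := mdeg (N m0).
  pose I := [seq ((d == mdeg (N m))%:R * (coef f m * kap m) * cval (N m), lv (N m)) | m <- S].
  have hI : forall t : K -> F, \sum_(w <- I) w.1 * \prod_(x <- w.2) t x = 0.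
    move=> t; have e := Ig (fun i a => embG a (t (i, a))) (fun i a => homO_emb hal hbe hga a _).
    have e2 := congr1 (projG d) e.
    rewrite (projG0 hal hbe hga) ev_tsum big_map (projG_sum hal hbe hga) in e2.
    apply: (etrans _ e2); rewrite big_map; apply: eq_bigr => m _ /=.
    rewrite (ev_mono hal hbe hga (fun i a => t (i, a))) (scOE hal hbe hga) (projGE hal hbe hga).
    rewrite tprod_K; case: (d == mdeg (N m)); rewrite ?mul1r ?mul0r //.
    by rewrite mulrA.
  have := ind Finf hI (lv (N m0)); rewrite big_map.
  rewrite (eq_bigl (fun m => N m == N m0)); last first.
    by move=> m /=; rewrite !lv_N perm_sort perm_sym perm_sort perm_sym N_eq.
  rewrite big_mkcond /= (eq_bigr (fun m => cval (N m0) * (coef f m * kap m * (N m == N m0)%:R))); last first.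
    move=> m _; case: (eqVneq (N m) (N m0)) => [e|_]; last by rewrite /= !mulr0.
    by rewrite /= e /d eqxx mul1r mulr1 mulrC.
  by rewrite -mulr_sumr => /eqP; rewrite mulf_eq0 (negbTE (cval_neq0 _)) /= => /eqP ->.
have := TC_add JC Jfg Jg => hh; apply: (TC_peq JC _ hh) => n /=.
by rewrite mulN1r addrNK.
Qed.
End Main.


Theorem mainTheorem1 (F : fieldType)
  (F_infinite : forall s : seq F, exists x : F, x \notin s)
  (F_char : (2%:R : F) != 0)
  (al be ga : F) (hal : al != 0) (hbe : be != 0) (hga : ga != 0) :
  forall f : term F, graded_identity_O al be ga f <-> TGen (@oct_gens F) f.
Proof.
move=> f; split.
  exact: (hard_dir F_infinite hal hbe hga).
exact: (easy_dir hal hbe hga).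
Qed.
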